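(* Let $f\colon\mathbb Q\to\mathbb R$ be arbitrary and $\sigma\in\mathbb C$. Then for every $n\ge1$, $$F_{n,\sigma}(f)=\sum_{d=1}^n\frac{1}{d^{2\sigma}}\,(\mu*D_{f_\sigma})(d)=\sum_{d\le n}\frac{D_{f_\sigma}(d)}{d^{2\sigma}}\Big(\sum_{\lambda\le n/d}\frac{\mu(\lambda)}{\lambda^{2\sigma}}\Big).$$
   Context: $\mathcal F_n=\{j/m: 1\le j\le m\le n,\ \gcd(j,m)=1\}$. $f_\sigma(x)=f(x)/x^\sigma$ for rational $x>0$ ($x^\sigma=e^{\sigma\log x}$). $F_{n,\sigma}(f)=\sum_{\kappa/\lambda\in\mathcal F_n}(\kappa\lambda)^{-\sigma}f(\kappa/\lambda)$. $D_g(d)=\sum_{k=1}^d g(k/d)$. $\mu$ is the Möbius function and $(\mu*a)(d)=\sum_{e\mid d}\mu(d/e)a(e)$ is the Dirichlet convolution. *)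

(* Defs.v *)
From mathcomp Require Import all_boot all_order all_algebra.
From mathcomp Require Import complex.
From mathcomp Require Import all_classical all_reals all_analysis.
Set Implicit Arguments. Unset Strict Implicit. Unset Printing Implicit Defensive.
Import Order.TTheory GRing.Theory Num.Theory.
Local Open Scope ring_scope.
Local Open Scope complex_scope.

(* Möbius function (with the harmless convention mu 0 = 0). *)
Definition moebius (n : nat) : int :=
  if (0 < n)%N && all (fun p => logn p n == 1)%N (primes n)
  then (-1) ^+ size (primes n) else 0.

Section Defs.
Variable R : realType.

(* Complex power x^s := exp(s log x) for real x > 0, written out:
   s log x = (Re s) ln x + i (Im s) ln x. *)
Definition cpow (x : R) (s : R[i]) : R[i] :=
  let a : R := @complex.Re R s * ln x in let b : R := @complex.Im R s * ln x in
  (expR a * cos b) +i* (expR a * sin b).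

Definition fsigma (f : rat -> R) (s : R[i]) (x : rat) : R[i] :=
  (f x)%:C / cpow (ratr x) s.

(* F_{n,sigma}(f) = sum over kappa/lambda in the Farey set F_n
   (reduced fractions, 1 <= kappa <= lambda <= n) *)
Definition Farey_sum (n : nat) (s : R[i]) (f : rat -> R) : R[i] :=
  \sum_(1 <= l < n.+1) \sum_(1 <= k < l.+1 | coprime k l)
     cpow ((k * l)%:R) (- s) * (f (k%:Q / l%:Q))%:C.

Definition Dsum (g : rat -> R[i]) (d : nat) : R[i] :=
  \sum_(1 <= k < d.+1) g (k%:Q / d%:Q).

Definition mu_conv (a : nat -> R[i]) (d : nat) : R[i] :=
  \sum_(e <- divisors d) (moebius (d %/ e))%:~R * a e.

End Defs.

(* Main.v *)
Require Import Defs.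
From mathcomp Require Import all_boot all_order all_algebra.
From mathcomp Require Import complex.
From mathcomp Require Import all_classical all_reals all_analysis.
From mathcomp Require Import ring.
Import Order.TTheory GRing.Theory Num.Theory.
Local Open Scope ring_scope.

Section Gen.
Variable V : zmodType.

Lemma sum_mult (t n : nat) (P : pred nat) (F : nat -> V) : (0 < t)%N ->
  \sum_(1 <= k < n.+1 | (t %| k)%N && P k) F k =
  \sum_(1 <= j < (n %/ t)%N.+1 | P (t * j)%N) F (t * j)%N.
Proof.
move=> t0; elim: n => [|n IH].
  by rewrite div0n !big_geq.
rewrite big_mkcond big_nat_recr //= -big_mkcond IH divnS //.
case: (boolP (t %| n.+1)%N) => /= tn.
  rewrite add1n [in RHS]big_mkcond big_nat_recr //= -big_mkcond.
  have e : (t * (n %/ t).+1 = n.+1)%N.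
    by have := divnS n t0; rewrite tn add1n => <-; rewrite mulnC divnK.
  by rewrite e.
by rewrite add0n addr0.
Qed.

Lemma sum_divisors (d : nat) (F : nat -> V) : (0 < d)%N ->
  \sum_(e <- divisors d) F e = \sum_(1 <= e < d.+1 | (e %| d)%N) F e.
Proof.
move=> d0; rewrite -[RHS]big_filter; apply: congr_big => //; apply: esym.
apply: (@irr_sorted_eq _ ltn).
- exact: ltn_trans.
- exact: ltnn.
- by apply: sorted_filter; [exact: ltn_trans | exact: iota_ltn_sorted].
- exact: sorted_divisors_ltn.
move=> e; rewrite mem_filter -dvdn_divisors // mem_index_iota.
case: (boolP (e %| d)%N) => //= ed; rewrite ?andbF //.
rewrite ltnS (dvdn_leq d0 ed) andbT.
by case: e ed => // ; rewrite dvd0n => /eqP d00; rewrite d00 in d0.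
Qed.

Lemma sum_div_widen (x N : nat) (F : nat -> V) : (0 < x)%N -> (x <= N)%N ->
  \sum_(1 <= m < N.+1 | (m %| x)%N) F m = \sum_(1 <= m < x.+1 | (m %| x)%N) F m.
Proof.
move=> x0 xN; rewrite [RHS](big_nat_widen _ _ N.+1) //.
by apply: eq_bigl => m; case: (boolP (m %| x)%N) => //= mx; rewrite ltnS dvdn_leq.
Qed.

Lemma divn_inv (x a : nat) : (0 < x)%N -> (a %| x)%N -> (x %/ (x %/ a))%N = a.
Proof. by move=> x0 ax; rewrite divnA // mulKn. Qed.

Lemma sum_div_inv (x : nat) (F : nat -> V) : (0 < x)%N ->
  \sum_(1 <= m < x.+1 | (m %| x)%N) F (x %/ m)%N = \sum_(1 <= m < x.+1 | (m %| x)%N) F m.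
Proof.
move=> x0; rewrite -!sum_divisors // -(big_map (fun m => x %/ m)%N xpredT).
apply: perm_big; apply: uniq_perm.
- rewrite map_inj_in_uniq ?divisors_uniq // => a b.
  rewrite -!dvdn_divisors // => ax bx eq.
  by rewrite -(@divn_inv x a x0 ax) eq divn_inv.
- exact: divisors_uniq.
move=> y; rewrite -dvdn_divisors //; apply/mapP/idP.
  by case=> a; rewrite -dvdn_divisors // => ax ->; apply: dvdn_div.
move=> yx; exists (x %/ y)%N; first by rewrite -dvdn_divisors // dvdn_div.
by rewrite divn_inv.
Qed.
End Gen.

Lemma moebius_pe0 p e : prime p -> (0 < e)%N -> (p %| e)%N -> moebius (p * e) = 0.
Proof.
move=> pp e0 pe; rewrite /moebius muln_gt0 prime_gt0 // e0 /=.
case: ifP => // /allP H; exfalso.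
have : p \in primes (p * e) by rewrite mem_primes pp muln_gt0 prime_gt0 // e0 dvdn_mulr.
move/H; rewrite (lognM _ (prime_gt0 pp) e0) logn_prime // eqxx.
have : (0 < logn p e)%N by rewrite logn_gt0 mem_primes pp e0 pe.
by case: (logn p e).
Qed.

Lemma moebius_pe p e : prime p -> (0 < e)%N -> ~~ (p %| e)%N ->
  moebius (p * e) = - moebius e.
Proof.
move=> pp e0 pe.
have p0 := prime_gt0 pp.
have pnot : p \notin primes e by rewrite mem_primes pp e0.
have perm : perm_eq (primes (p * e)) (p :: primes e).
  apply: uniq_perm; first exact: primes_uniq.
    by rewrite /= pnot primes_uniq.
  by move=> q; rewrite (primesM _ p0 e0) primes_prime // in_cons in_nil orbF.
have lp : logn p e = 0%N.
  by apply/eqP; rewrite -leqn0 leqNgt logn_gt0.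
have hall : all (fun q => logn q (p * e) == 1%N) (primes (p * e)) =
            all (fun q => logn q e == 1%N) (primes e).
  rewrite (perm_all _ perm) /= (lognM _ p0 e0) logn_prime // eqxx lp /=.
  apply: eq_in_all => q qe; rewrite (lognM _ p0 e0) logn_prime //.
  case: (eqVneq q p) => [qp|_]; first by move: pnot; rewrite -qp qe.
  by rewrite add0n.
rewrite /moebius muln_gt0 prime_gt0 // e0 /= hall (perm_size perm) /=.
by case: ifP => _; rewrite ?oppr0 // exprS mulN1r.
Qed.

Lemma moebius_sum x : (0 < x)%N ->
  \sum_(1 <= u < x.+1 | (u %| x)%N) moebius u = (x == 1%N)%:R.
Proof.
move=> x0; case: (ltngtP x 1) => [|x1|->]; first by rewrite ltnS leqn0 => /eqP x00; rewrite x00 in x0.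
  set p := pdiv x; have pp : prime p by apply: pdiv_prime.
  have px : (p %| x)%N by apply: pdiv_dvd.
  have p0 := prime_gt0 pp.
  rewrite (bigID (fun u => p %| u)%N) /=.
  rewrite (eq_bigl (fun u => (p %| u)%N && (u %| x)%N)); last by move=> u; rewrite andbC.
  rewrite sum_mult //.
  rewrite [X in X + _](eq_bigl (fun j => (j %| x %/ p)%N)); last by move=> j; rewrite (dvdn_divRL _ px) mulnC.
  rewrite [X in X + _]big_nat_cond [X in X + _](bigID (fun j => p %| j)%N) /= big1; last first.

    by move=> j /andP[/andP[/andP[j0 _] _] pj]; rewrite moebius_pe0.
  rewrite add0r.
  rewrite (eq_bigr (fun j => - moebius j)); last first.
    by move=> j /andP[/andP[/andP[j0 _] _] pj]; rewrite moebius_pe.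
  rewrite sumrN.
  have xp0 : (0 < x %/ p)%N by rewrite divn_gt0 // dvdn_leq // ltnW.
  rewrite [X in - X + _](big_nat_widen _ _ x.+1); last by rewrite ltnS; apply: leq_div.
  rewrite [X in - X + _ = _](eq_bigl (fun j => ((j %| x)%N && ~~ (p %| j)%N))).
    by rewrite addNr.
  move=> j; case: (boolP (p %| j)%N) => pj; rewrite ?andbF //= andbT.
  case: (boolP (j %| x)%N) => jx.
    have jxp : (j %| x %/ p)%N.
      by rewrite dvdn_divRL // Gauss_dvd ?jx ?px // coprime_sym prime_coprime.
    have j0 : (0 < j)%N by case: j jx {pj jxp} => //; rewrite dvd0n => /eqP xx; rewrite xx in x0.
    by rewrite jxp j0 ltnS (dvdn_leq xp0 jxp).
  case: (boolP (j %| x %/ p)%N) => jxp; rewrite ?andbF //.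
  by move: jxp; rewrite dvdn_divRL // => /(dvdn_trans (dvdn_mulr p (dvdnn j))); rewrite (negbTE jx).
by rewrite big_mkcond big_nat1 /=.
Qed.

Lemma mobius_inv (K : comNzRingType) (P : nat -> K) d : (0 < d)%N ->
  \sum_(e <- divisors d) (moebius (d %/ e))%:~R *
     (\sum_(1 <= m < e.+1 | (m %| e)%N) P m) = P d.
Proof.
move=> d0; rewrite sum_divisors //.
rewrite -(sum_div_inv _ d (fun e => (moebius (d %/ e))%:~R * (\sum_(1 <= m < e.+1 | (m %| e)%N) P m)) d0).

rewrite (eq_bigr (fun u => \sum_(1 <= m < d.+1 | (m %| d %/ u)%N) (moebius u)%:~R * P m)); last first.
  move=> u ud; rewrite divn_inv //.
  have u0 : (0 < u)%N by apply: dvdn_gt0 ud.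
  rewrite mulr_sumr (sum_div_widen _ (d %/ u) d) //; [by rewrite divn_gt0 // dvdn_leq | exact: leq_div].
rewrite (exchange_big_dep_nat (fun m => m %| d)%N); last first.
  by move=> u m _ _ ud; rewrite (dvdn_divRL _ ud) => /(dvdn_trans (dvdn_mulr u (dvdnn m))).
rewrite (eq_bigr (fun m => (\sum_(1 <= u < (d %/ m).+1 | (u %| d %/ m)%N) (moebius u)%:~R) * P m)); last first.
  move=> m md.
  have m0 : (0 < m)%N by apply: dvdn_gt0 md.
  rewrite mulr_suml -(sum_div_widen _ (d %/ m) d); [ | by rewrite divn_gt0 // dvdn_leq | exact: leq_div].
  apply: eq_bigl => u; rewrite (dvdn_divRL _ md).
  case: (boolP (u %| d)%N) => ud /=; first by rewrite (dvdn_divRL _ ud) mulnC.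
  apply/esym/negbTE; apply: contra ud; exact: dvdn_trans (dvdn_mulr m (dvdnn u)).
rewrite -(sum_divisors _ d _ d0).
rewrite (bigD1_seq d (divisors_id d0) (divisors_uniq d)) divnn d0.
rewrite -mulrz_sumr moebius_sum // eqxx mulr1z mul1r big1_seq; first exact: addr0.
move=> m /andP[md]; rewrite -dvdn_divisors // => mdd.
have m0 : (0 < m)%N by apply: dvdn_gt0 mdd.
rewrite -mulrz_sumr moebius_sum; last by rewrite divn_gt0 // dvdn_leq.
case: eqP => [h|]; last by rewrite mulr0z mul0r.
by move: md; rewrite -{1}(divnK mdd) h mul1n eqxx.
Qed.

Lemma ratMM (t j m : nat) : (0 < t)%N ->
  (t * j)%N%:Q / (t * m)%N%:Q = j%:Q / m%:Q.
Proof.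
move=> t0; rewrite !PoszM !intrM -mulf_div divff ?mul1r //.
by rewrite intr_eq0 -lt0n.
Qed.

Lemma div_gcd_cond (d m k : nat) : (0 < d)%N -> (m %| d)%N ->
  (m == d %/ gcdn k d)%N = ((d %/ m) %| k)%N && coprime (k %/ (d %/ m)) m.
Proof.
move=> d0 md; set t := (d %/ m)%N.
have dE : d = (t * m)%N by rewrite /t divnK.
have m0 : (0 < m)%N by apply: dvdn_gt0 md.
have t0 : (0 < t)%N by rewrite /t divn_gt0 // dvdn_leq.
case: (boolP (t %| k)%N) => tk /=.
  have kE : k = (t * (k %/ t))%N by rewrite mulnC divnK.
  set j := (k %/ t)%N in kE *.
  rewrite {1}kE dE -muln_gcdr divnMl // /coprime.
  have g0 : (0 < gcdn j m)%N by rewrite gcdn_gt0 m0 orbT.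
  apply/eqP/eqP => [h|->]; last by rewrite divn1.
  apply/eqP; rewrite -(eqn_pmul2l m0) muln1 {1}h.
  by rewrite divnK ?dvdn_gcdr.
apply/negbTE; apply: contra tk => /eqP h.
have G0 : (0 < gcdn k d)%N by rewrite gcdn_gt0 d0 orbT.
have -> : t = gcdn k d.
  rewrite /t h divn_inv //; exact: dvdn_gcdr.
exact: dvdn_gcdl.
Qed.

Definition Pg {K : zmodType} (g : rat -> K) (m : nat) : K :=
  \sum_(1 <= j < m.+1 | coprime j m) g (j%:Q / m%:Q).

Lemma Dsum_dec (K : zmodType) (g : rat -> K) (d : nat) : (0 < d)%N ->
  \sum_(1 <= k < d.+1) g (k%:Q / d%:Q) =
  \sum_(1 <= m < d.+1 | (m %| d)%N) Pg g m.
Proof.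
move=> d0.
rewrite (eq_bigr (fun k => \sum_(1 <= m < d.+1 | (m %| d)%N && (m == d %/ gcdn k d)%N) g (k%:Q / d%:Q))); last first.
  move=> k _.
  have G0 : (0 < gcdn k d)%N by rewrite gcdn_gt0 d0 orbT.
  have Gd : (d %/ gcdn k d %| d)%N by apply: dvdn_div; exact: dvdn_gcdr.
  rewrite (eq_bigl (fun m => m == d %/ gcdn k d)%N); last first.
    by move=> m; case: (eqVneq m (d %/ gcdn k d)%N) => [->|]; rewrite ?andbF ?andbT.
  rewrite big_nat1_eq; case: ifP => //; rewrite ltnS divn_gt0 // leq_div andbT.
  by rewrite dvdn_leq // dvdn_gcdr.
rewrite (exchange_big_dep_nat (fun m => m %| d)%N); last by move=> k m _ _ _ /andP[].
apply: eq_bigr => m md /=.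
have m0 : (0 < m)%N by apply: dvdn_gt0 md.
have t0 : (0 < d %/ m)%N by rewrite divn_gt0 // dvdn_leq.
rewrite (eq_bigl (fun k => ((d %/ m) %| k)%N && coprime (k %/ (d %/ m)) m)); last first.
  by move=> k; rewrite md /= div_gcd_cond.
rewrite sum_mult // divn_inv //.
apply: eq_big => j; first by rewrite mulKn.
move=> _; congr g.
by rewrite -{2}(divnK md) ratMM.
Qed.

Local Open Scope complex_scope.

Section Cpow.
Variable R : realType.

Definition Ec (a b : R) : R[i] := (expR a * cos b) +i* (expR a * sin b).

Lemma EcD a1 b1 a2 b2 : Ec (a1 + a2) (b1 + b2) = Ec a1 b1 * Ec a2 b2.
Proof.
rewrite /Ec expRD cosD sinD; apply/eqP; rewrite eq_complex /=.
by apply/andP; split; apply/eqP; ring.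
Qed.

Lemma Ec00 : Ec 0 0 = 1.
Proof. by rewrite /Ec expR0 cos0 sin0 mul1r mulr0. Qed.

Lemma Ec_neq0 a b : Ec a b != 0.
Proof.
apply/negP => /eqP h.
have := EcD a b (- a) (- b); rewrite !subrr Ec00 h mul0r.
by move/eqP; rewrite oner_eq0.
Qed.

Lemma EcN a b : Ec (- a) (- b) = (Ec a b)^-1.
Proof.
apply: (mulfI (Ec_neq0 a b)); rewrite -EcD !subrr Ec00 divff //; exact: Ec_neq0.
Qed.

Lemma cpowE (x : R) (s : R[i]) : cpow x s = Ec (complex.Re s * ln x) (complex.Im s * ln x).
Proof. by []. Qed.

Lemma cpow_neq0 (x : R) (s : R[i]) : cpow x s != 0.
Proof. exact: Ec_neq0. Qed.

Lemma cpowM (x y : R) (s : R[i]) : 0 < x -> 0 < y -> cpow (x * y) s = cpow x s * cpow y s.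
Proof.
move=> x0 y0; rewrite !cpowE lnM ?posrE // !mulrDr EcD //.
Qed.

Lemma cpowV (x : R) (s : R[i]) : 0 < x -> cpow x^-1 s = (cpow x s)^-1.
Proof.
by move=> x0; rewrite !cpowE lnV ?posrE // !mulrN EcN.
Qed.

Lemma cpowD (x : R) (s t : R[i]) : cpow x (s + t) = cpow x s * cpow x t.
Proof.
case: s => a b; case: t => c d; rewrite !cpowE /= -EcD.
by rewrite !mulrDl.
Qed.

Lemma cpowN (x : R) (s : R[i]) : cpow x (- s) = (cpow x s)^-1.
Proof.
case: s => a b; rewrite !cpowE /= -EcN.
by rewrite !mulNr.
Qed.

Lemma cpow2 (x : R) (s : R[i]) : cpow x (2%:R * s) = cpow x s * cpow x s.
Proof. by rewrite mulr_natl mulr2n cpowD. Qed.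

End Cpow.

Lemma eq_sum_nat (V : zmodType) m n (P : pred nat) (F G : nat -> V) :
  (forall i, (m <= i < n)%N -> P i -> F i = G i) ->
  \sum_(m <= i < n | P i) F i = \sum_(m <= i < n | P i) G i.
Proof.
move=> h; rewrite big_nat_cond [RHS]big_nat_cond; apply: eq_bigr => i /andP[]; exact: h.
Qed.

Lemma ratr_frac (R : realType) (k d : nat) :
  ratr (k%:Q / d%:Q) = (k%:R / d%:R : R).
Proof. by rewrite fmorph_div /= !ratr_int. Qed.

Lemma mu_conv_P (R : realType) (g : rat -> R[i]) d : (0 < d)%N ->
  mu_conv (Dsum g) d = Pg g d.
Proof.
move=> d0; rewrite /mu_conv -(mobius_inv _ (Pg g) d d0).
apply: eq_big_seq => e; rewrite -dvdn_divisors // => ed.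
have e0 : (0 < e)%N by apply: dvdn_gt0 ed.
by rewrite /Dsum Dsum_dec.
Qed.

Theorem lemma3p3 (R : realType) (f : rat -> R) (s : R[i]) (n : nat) :
  (1 <= n)%N ->
  Farey_sum n s f
    = \sum_(1 <= d < n.+1)
        (cpow (d%:R) (2%:R * s))^-1 * mu_conv (Dsum (fsigma f s)) d
  /\
  \sum_(1 <= d < n.+1)
        (cpow (d%:R) (2%:R * s))^-1 * mu_conv (Dsum (fsigma f s)) d
    = \sum_(1 <= d < n.+1)
        Dsum (fsigma f s) d / cpow (d%:R) (2%:R * s)
        * (\sum_(1 <= l < (n %/ d).+1)
              (moebius l)%:~R / cpow (l%:R) (2%:R * s)).
Proof.
move=> n1; split.
  rewrite /Farey_sum.
  apply: eq_sum_nat => d /andP[d0 _] _.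
  rewrite mu_conv_P // /Pg mulr_sumr.
  apply: eq_sum_nat => k /andP[k0 _] _.
  rewrite /fsigma ratr_frac natrM cpowN cpowM ?ltr0n // cpowM ?invr_gt0 ?ltr0n //.
  rewrite cpowV ?ltr0n // cpow2.
  have ha := @cpow_neq0 R (k%:R) s; have hb := @cpow_neq0 R (d%:R) s.
  move: (cpow _ _) (cpow _ _) ((f _)%:C) ha hb => a b F ha hb.
  rewrite invf_div [RHS]mulrCA [in RHS]invfM -[in RHS]mulrA (mulKf hb).
  by rewrite invfM mulrC (mulrC b^-1).
pose c (x : nat) := cpow (x%:R : R) (2%:R * s).
have cM x y : (0 < x)%N -> (0 < y)%N -> c (x * y)%N = c x * c y.
  by move=> x0 y0; rewrite /c natrM cpowM // ltr0n.
have cn0 x : c x != 0 by exact: cpow_neq0.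
rewrite -/c.
set D := Dsum (fsigma f s).
rewrite (eq_sum_nat _ _ _ _ _ (fun d => \sum_(1 <= e < n.+1 | (e %| d)%N) (c d)^-1 * ((moebius (d %/ e))%:~R * D e))); last first.
  move=> d /andP[d0 dn] _.
  rewrite /mu_conv (sum_divisors _ d) // mulr_sumr -(sum_div_widen _ d n) //.
rewrite (exchange_big_dep_nat xpredT) //=.
apply: eq_sum_nat => e /andP[e0 en] _.
rewrite (eq_bigl (fun d => (e %| d)%N && true)); last by move=> d; rewrite andbT.
rewrite sum_mult // mulr_sumr.
apply: eq_sum_nat => l /andP[l0 _] _.
rewrite mulKn // cM // invfM.
rewrite -/(c e) -/(c l).
move: (c e)^-1 (c l)^-1 ((moebius l)%:~R : R[i]) (D e) => x y z w.
ring.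
Qed.
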